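(* Let $N=\{1,\dots,n\}$, $n\ge 2$, be a parallel-link network with one unit of demand and affine latencies $\ell_i(x_i)=a_ix_i+b_i$ with $a_i>0$, $b_i\ge 0$ for all $i\in N$. Then for every price cap $c\in\mathbb{R}_+$ there exists a $c$-capped subgame perfect Nash equilibrium, i.e. $\mathcal{T}(c)\neq\emptyset$.
   Context: Model: a finite set $N=\{1,\dots,n\}$, $n\ge 2$, of parallel links connecting a common source to a common destination; one unit of flow must be sent. A flow is a vector $x\in\mathbb{R}^N_+$ with $\sum_{i\in N}x_i=1$. Each link $i$ has a latency function $\ell_i$. A toll vector is $t\in\mathbb{R}^N_+$; the effective cost of link $i$ is $\ell_i(x_i)+t_i$. A flow $x$ is a Wardrop equilibrium for $t$ if for all $i,j\in N$ with $x_i>0$, $\ell_i(x_i)+t_i\le \ell_j(x_j)+t_j$; under the assumptions used it exists and is unique, and is denoted $x(t)$. Firm $i$ owns link $i$ and has profit $\Pi_i(t_i,t_{-i})=t_i\cdot x_i(t)$. For $c\in\mathbb{R}_+$, a toll vector $t$ is a $c$-capped subgame perfect Nash equilibrium if $0\le t_i\le c$ for all $i$ and, for every $i\in N$ and every $t_i'\in[0,c]$, $\Pi_i(t_i,t_{-i})\ge \Pi_i(t_i',t_{-i})$ (where the flow is recomputed as the Wardrop equilibrium for $(t'_i,t_{-i})$). $\mathcal{T}(c)$ denotes the set of such equilibria. *)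

(* Defs.v *)
(* classical real numbers. Links are indexed by 0..n-1. *)
From Stdlib Require Import Reals Lra Lia.
Open Scope R_scope.

Fixpoint rsum (n : nat) (f : nat -> R) : R :=
  match n with
  | O => 0
  | S m => rsum m f + f m
  end.

Definition is_flow (n : nat) (x : nat -> R) : Prop :=
  (forall i, (i < n)%nat -> 0 <= x i) /\ rsum n x = 1.

Definition wardrop (n : nat) (l : nat -> R -> R) (t x : nat -> R) : Prop :=
  is_flow n x /\
  forall i j, (i < n)%nat -> (j < n)%nat -> 0 < x i ->
    l i (x i) + t i <= l j (x j) + t j.

Definition update (t : nat -> R) (i : nat) (v : R) : nat -> R :=
  fun j => if Nat.eqb j i then v else t j.

(* c-capped subgame perfect Nash equilibrium. Profits are evaluated at the
   (unique) Wardrop equilibrium, expressed by quantifying over all Wardrop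
   equilibria of the respective toll vectors. *)
Definition capped_SPNE (n : nat) (l : nat -> R -> R) (c : R) (t : nat -> R) : Prop :=
  (forall i, (i < n)%nat -> 0 <= t i <= c) /\
  forall i, (i < n)%nat -> forall v, 0 <= v <= c ->
    forall x x', wardrop n l t x -> wardrop n l (update t i v) x' ->
      t i * x i >= v * x' i.

(* Main.v *)
Require Import Defs.
From Stdlib Require Import Reals Lra Lia Psatz Classical.
Open Scope R_scope.

Definition mn (x y : R) := (x + y - Rabs (x - y)) / 2.

Lemma mn_cases x y : (mn x y = x /\ x <= y) \/ (mn x y = y /\ y <= x).
Proof. unfold mn. destruct (Rle_dec x y).
 - left. rewrite Rabs_left1 by lra. split; lra.
 - right. rewrite Rabs_right by lra. split; lra. Qed.

Lemma rsum_ext n f g : (forall i, (i < n)%nat -> f i = g i) -> rsum n f = rsum n g.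
Proof. induction n; simpl; intros H; auto. rewrite IHn by (intros; apply H; lia).
 rewrite H by lia. auto. Qed.

Lemma rsum_le n f g : (forall i, (i<n)%nat -> f i <= g i) -> rsum n f <= rsum n g.
Proof. induction n; simpl; intros H; [lra|].
 assert (rsum n f <= rsum n g) by (apply IHn; intros; apply H; lia).
 assert (f n <= g n) by (apply H; lia). lra. Qed.

Lemma rsum_lt n f g : (forall i, (i<n)%nat -> f i <= g i) ->
  (exists i, (i<n)%nat /\ f i < g i) -> rsum n f < rsum n g.
Proof. induction n; intros H [k [Hk Hlt]]; [lia|]. simpl.
 destruct (Nat.eq_dec k n).
 - subst. assert (rsum n f <= rsum n g) by (apply rsum_le; intros; apply H; lia). lra.
 - assert (rsum n f < rsum n g). { apply IHn. intros; apply H; lia. exists k; split; auto; lia. }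
   assert (f n <= g n) by (apply H; lia). lra. Qed.

Lemma rsum_zero n : rsum n (fun _ => 0) = 0.
Proof. induction n; simpl; auto. rewrite IHn; ring. Qed.

Lemma rsum_nonneg n f : (forall i, (i<n)%nat -> 0 <= f i) -> 0 <= rsum n f.
Proof. intros H. rewrite <- (rsum_zero n). apply rsum_le; auto. Qed.

Lemma rsum_plus n f g : rsum n (fun i => f i + g i) = rsum n f + rsum n g.
Proof. induction n; simpl; [ring|]. rewrite IHn; ring. Qed.

Lemma rsum_scal n k f : rsum n (fun i => k * f i) = k * rsum n f.
Proof. induction n; simpl; [ring|]. rewrite IHn; ring. Qed.

Lemma rsum_pos_exists n f : (forall i, (i<n)%nat -> 0 <= f i) -> 0 < rsum n f ->
  exists i, (i<n)%nat /\ 0 < f i.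
Proof. induction n; simpl; intros H Hp; [lra|].
 destruct (Rlt_dec 0 (f n)). exists n; split; auto.
 assert (f n >= 0) by (apply Rle_ge, H; lia).
 destruct IHn as [i [Hi Hf]]. intros; apply H; lia. lra. exists i; split; auto. Qed.

Lemma rsum_split n f i : (i<n)%nat ->
  rsum n f = f i + rsum n (fun j => if Nat.eqb j i then 0 else f j).
Proof. induction n; intros Hi; [lia|]. simpl.
 destruct (Nat.eq_dec i n).
 - subst. rewrite Nat.eqb_refl.
   rewrite (rsum_ext n (fun j => if Nat.eqb j n then 0 else f j) f). ring.
   intros j Hj. destruct (Nat.eqb_spec j n); [lia|auto].
 - rewrite (IHn ltac:(lia)). destruct (Nat.eqb_spec n i); [lia|]. ring. Qed.

Lemma rsum_ge_term n f i : (forall j, (j<n)%nat -> 0 <= f j) -> (i<n)%nat -> f i <= rsum n f.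
Proof. intros H Hi. rewrite (rsum_split n f i Hi).
 assert (0 <= rsum n (fun j => if Nat.eqb j i then 0 else f j)).
 { apply rsum_nonneg. intros j Hj. destruct (Nat.eqb j i); [lra|auto]. } lra. Qed.

Lemma cplus f g : continuity f -> continuity g -> continuity (fun p => f p + g p).
Proof. intros; exact (continuity_plus f g H H0). Qed.
Lemma cminus f g : continuity f -> continuity g -> continuity (fun p => f p - g p).
Proof. intros; exact (continuity_minus f g H H0). Qed.
Lemma cmult f g : continuity f -> continuity g -> continuity (fun p => f p * g p).
Proof. intros; exact (continuity_mult f g H H0). Qed.
Lemma cdiv f g : continuity f -> continuity g -> (forall p, g p <> 0) -> continuity (fun p => f p / g p).
Proof. intros; exact (continuity_div f g H H0 H1). Qed.
Lemma cconst k : continuity (fun _ => k).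
Proof. apply continuity_const. intros x y; reflexivity. Qed.
Lemma cid : continuity (fun p => p).
Proof. exact (derivable_continuous id derivable_id). Qed.
Lemma cabs f : continuity f -> continuity (fun p => Rabs (f p)).
Proof. intros; exact (continuity_comp f Rabs H Rcontinuity_abs). Qed.
Lemma cmn f g : continuity f -> continuity g -> continuity (fun p => mn (f p) (g p)).
Proof. intros. unfold mn. apply cdiv; [|apply cconst|intros; lra].
 apply cminus. apply cplus; auto. apply cabs. apply cminus; auto. Qed.

Lemma cont_rsum m (F : R -> nat -> R) : (forall i, (i<m)%nat -> continuity (fun p => F p i)) ->
  continuity (fun p => rsum m (F p)).
Proof. induction m; simpl; intros H. apply cconst.
 apply cplus. apply IHm; intros; apply H; lia. apply H; lia. Qed.

Lemma fin_min n (P : nat -> Prop) (f : nat -> R) : (exists i, (i<n)%nat /\ P i) ->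
  exists k, (k<n)%nat /\ P k /\ forall j, (j<n)%nat -> P j -> f k <= f j.
Proof. induction n; intros [i [Hi HP]]; [lia|].
 destruct (classic (exists i, (i<n)%nat /\ P i)) as [He|Hn].
 - destruct (IHn He) as [k [Hk [HPk Hm]]].
   destruct (classic (P n)) as [Pn|nPn].
   + destruct (Rlt_dec (f n) (f k)).
     * exists n. repeat split; auto. intros j Hj Pj. destruct (Nat.eq_dec j n). subst; lra.
       assert (f k <= f j) by (apply Hm; auto; lia). lra.
     * exists k. repeat split; auto. intros j Hj Pj. destruct (Nat.eq_dec j n). subst; lra.
       apply Hm; auto; lia.
   + exists k. repeat split; auto. intros j Hj Pj. destruct (Nat.eq_dec j n). subst; tauto.
     apply Hm; auto; lia.
 - assert (i = n). { destruct (Nat.eq_dec i n); auto. exfalso; apply Hn; exists i; split; auto; lia. }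
   subst. exists n. repeat split; auto. intros j Hj Pj. destruct (Nat.eq_dec j n). subst; lra.
   exfalso; apply Hn; exists j; split; auto; lia. Qed.

Lemma fin_max n (P : nat -> Prop) (f : nat -> R) : (exists i, (i<n)%nat /\ P i) ->
  exists k, (k<n)%nat /\ P k /\ forall j, (j<n)%nat -> P j -> f j <= f k.
Proof. intros H. destruct (fin_min n P (fun i => - f i) H) as [k [Hk [Pk Hm]]].
 exists k. repeat split; auto. intros j Hj Pj. specialize (Hm j Hj Pj). lra. Qed.

Definition Kf (n:nat) (a w : nat -> R) (i:nat) : R :=
  rsum n (fun j => if Nat.eqb j i then 0 else w j / a j).
Definition Xf n (a b w : nat -> R) (L : R) i : R :=
  (L - b i) * (1 + a i * Kf n a w i) / (1 + 2 * a i * Kf n a w i).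
Definition Tf n (a b : nat -> R) c (w : nat -> R) L i : R := mn c (Xf n a b w L i).
Definition yg n a b c w L (A : nat -> bool) i : R :=
  if A i then (L - b i - Tf n a b c w L i) / a i else 0.
Definition Yg n a b c w L A := rsum n (yg n a b c w L A).
Definition ltA (b : nat -> R) L : nat -> bool := fun i => if Rlt_dec (b i) L then true else false.
Definition tt n a b c w L i := if Rlt_dec (b i) L then Tf n a b c w L i else 0.

Lemma K_nonneg n a w i : (forall j, (j<n)%nat -> 0 < a j) -> (forall j, (j<n)%nat -> 0 <= w j) ->
  0 <= Kf n a w i.
Proof. intros Ha Hw. unfold Kf. apply rsum_nonneg. intros j Hj. destruct (Nat.eqb j i). lra.
 unfold Rdiv. apply Rmult_le_pos. auto. left; apply Rinv_0_lt_compat; auto. Qed.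

Lemma T_facts n a b c w L i : 0 < a i -> 0 <= c -> 0 <= Kf n a w i -> b i <= L ->
  let K := Kf n a w i in let X := Xf n a b w L i in let T := Tf n a b c w L i in
  0 <= X <= L - b i /\ X * (1 + 2 * a i * K) = (L - b i) * (1 + a i * K) /\
  0 <= T <= c /\ T <= L - b i /\ ((T = X /\ X <= c) \/ (T = c /\ c <= X)).
Proof. intros Ha Hc HK Hb K X T.
 assert (HK' : 0 <= K) by exact HK.
 assert (0 <= a i * K) by nra.
 assert (Hd : 1 + 2 * a i * K > 0) by nra.
 assert (HX : X * (1 + 2 * a i * K) = (L - b i) * (1 + a i * K)).
 { unfold X, Xf. fold K. field. apply Rgt_not_eq; auto. }
 assert (0 <= X <= L - b i).
 { split; nra. }
 destruct (mn_cases c X) as [[E1 E2]|[E1 E2]]; unfold T, Tf; fold X; rewrite E1; repeat split; lra. Qed.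

Lemma Yg_ext_w n a b c w1 w2 L A : (forall j, (j<n)%nat -> w1 j = w2 j) ->
  Yg n a b c w1 L A = Yg n a b c w2 L A.
Proof. intros H. unfold Yg. apply rsum_ext. intros i Hi. unfold yg, Tf, Xf.
 replace (Kf n a w1 i) with (Kf n a w2 i). auto.
 unfold Kf. apply rsum_ext. intros j Hj. rewrite H by auto. auto. Qed.

Lemma Yg_ext_A n a b c w L A1 A2 : 0 <= c -> (forall i, (i<n)%nat -> A1 i = A2 i \/ b i = L) ->
  Yg n a b c w L A1 = Yg n a b c w L A2.
Proof. intros Hc H. unfold Yg. apply rsum_ext. intros i Hi. destruct (H i Hi) as [E|E].
 unfold yg; rewrite E; auto.
 assert (HT : Tf n a b c w L i = 0).
 { unfold Tf, Xf. rewrite E. replace (L - L) with 0 by ring. unfold Rdiv. rewrite !Rmult_0_l.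
   unfold mn. rewrite Rabs_right by lra. lra. }
 unfold yg. rewrite HT, E. destruct (A1 i), (A2 i); unfold Rdiv; ring. Qed.

Lemma yg_nonneg n a b c w L A i : 0 < a i -> 0 <= c -> 0 <= Kf n a w i ->
  (A i = true -> b i <= L) -> 0 <= yg n a b c w L A i.
Proof. intros Ha Hc HK HA. unfold yg. destruct (A i). 2: lra.
 destruct (T_facts n a b c w L i Ha Hc HK (HA eq_refl)) as [_ [_ [_ [H _]]]].
 unfold Rdiv. apply Rmult_le_pos. lra. left; apply Rinv_0_lt_compat; auto. Qed.

Definition lev n (a b t x : nat -> R) M :=
  forall j, (j<n)%nat -> M <= a j * x j + b j + t j /\ (0 < x j -> a j * x j + b j + t j = M).

Lemma no_higher n a b t x y M L : (forall i, (i<n)%nat -> 0 < a i) -> is_flow n x -> is_flow n y ->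
  lev n a b t x M -> lev n a b t y L -> L < M -> False.
Proof. intros Ha [Hx Sx] [Hy Sy] HM HL Hlt.
 assert (Hle : forall j, (j<n)%nat -> y j <= x j /\ (0 < y j -> y j < x j)).
 { intros j Hj. destruct (HM j Hj) as [M1 _]. destruct (HL j Hj) as [_ L2].
   pose proof (Ha j Hj). pose proof (Hx j Hj). pose proof (Hy j Hj).
   destruct (Rlt_dec 0 (y j)).
   - specialize (L2 r). split; intros; nra.
   - split; intros; lra. }
 destruct (rsum_pos_exists n y Hy ltac:(lra)) as [k [Hk Hyk]].
 assert (rsum n y < rsum n x). apply rsum_lt. intros; apply Hle; auto.
 exists k; split; auto. apply Hle; auto. lra. Qed.

Lemma uniq n a b t x y M L : (forall i, (i<n)%nat -> 0 < a i) -> is_flow n x -> is_flow n y ->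
  lev n a b t x M -> lev n a b t y L -> forall j, (j<n)%nat -> x j = y j.
Proof. intros Ha Fx Fy HM HL j Hj.
 destruct (Rtotal_order L M) as [H|[H|H]].
 - exfalso; eapply (no_higher n a b t x y M L); eauto.
 - subst. destruct Fx as [Hx _]; destruct Fy as [Hy _].
   pose proof (Ha j Hj). pose proof (Hx j Hj). pose proof (Hy j Hj).
   destruct (HM j Hj) as [M1 M2]. destruct (HL j Hj) as [L1 L2].
   destruct (Rlt_dec 0 (x j)); destruct (Rlt_dec 0 (y j)).
   + specialize (M2 r); specialize (L2 r0). nra.
   + specialize (M2 r). nra.
   + specialize (L2 r). nra.
   + lra.
 - exfalso; eapply (no_higher n a b t y x L M); eauto. Qed.

Lemma lev_of_wardrop n a b t x : wardrop n (fun i y => a i * y + b i) t x -> exists M, lev n a b t x M.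
Proof. intros [[Hx Sx] W].
 destruct (rsum_pos_exists n x Hx ltac:(lra)) as [k [Hk Hxk]].
 exists (a k * x k + b k + t k). intros j Hj. split.
 - pose proof (W k j Hk Hj Hxk) as W1. simpl in W1. lra.
 - intros Hxj. pose proof (W k j Hk Hj Hxk) as W1. pose proof (W j k Hj Hk Hxj) as W2.
   simpl in W1, W2. lra. Qed.

Definition Good n a b c L (w : nat -> R) :=
  (forall j, (j<n)%nat -> 0 <= w j <= 1) /\
  (forall j, (j<n)%nat -> b j < L -> w j = 1) /\
  (forall j, (j<n)%nat -> L < b j -> w j = 0) /\
  Yg n a b c w L (ltA b L) = 1.

Lemma lemmaA n a b c L w : (forall i, (i<n)%nat -> 0 < a i /\ 0 <= b i) -> 0 <= c ->
  Good n a b c L w -> capped_SPNE n (fun i y => a i * y + b i) c (tt n a b c w L).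
Proof. intros Hab Hc [Hw [Hw1 [Hw0 HY]]].
 assert (Ha : forall i, (i<n)%nat -> 0 < a i) by (intros; apply Hab; auto).
 assert (HK : forall i, 0 <= Kf n a w i) by (intros; apply K_nonneg; auto; intros; apply Hw; auto).
 set (y := yg n a b c w L (ltA b L)).
 set (t := tt n a b c w L).
 assert (Hy : forall i, (i<n)%nat -> 0 <= y i).
 { intros i Hi. apply yg_nonneg; auto. unfold ltA. destruct (Rlt_dec (b i) L); intros; [lra|discriminate]. }
 assert (Fy : is_flow n y) by (split; auto).
 assert (Hcost : forall i, (i<n)%nat -> (b i < L -> a i * y i + b i + t i = L) /\ (L <= b i -> y i = 0 /\ t i = 0)).
 { intros i Hi. unfold y, t, yg, tt, ltA. pose proof (Ha i Hi).
   destruct (Rlt_dec (b i) L). split; intros. field. lra. lra. split; intros. lra. auto. }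
 assert (Ly : lev n a b t y L).
 { intros j Hj. destruct (Hcost j Hj) as [C1 C2]. destruct (Rlt_dec (b j) L).
   - rewrite (C1 r). split; auto; lra.
   - destruct (C2 ltac:(lra)) as [E1 E2]. rewrite E1, E2. split; intros; lra. }
 assert (Ht : forall i, (i<n)%nat -> 0 <= t i <= c).
 { intros i Hi. unfold t, tt. destruct (Rlt_dec (b i) L). 2: lra.
   destruct (T_facts n a b c w L i (Ha i Hi) Hc (HK i) ltac:(lra)) as [_ [_ [H _]]]. exact H. }
 split. exact Ht.
 intros i Hi v Hv x x' Hx Hx'.
 destruct (lev_of_wardrop n a b t x Hx) as [M HM].
 rewrite (uniq n a b t x y M L Ha (proj1 Hx) Fy HM Ly i Hi).
 pose proof (Hy i Hi). pose proof (Ht i Hi).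
 destruct Hx' as [[Hx'0 Sx'] Wx'].
 destruct (Rlt_dec 0 (x' i)) as [Hxp|Hxp].
 2: { assert (x' i = 0) by (pose proof (Hx'0 i Hi); lra). rewrite H1. nra. }
 set (L' := a i * x' i + b i + v).
 assert (HL' : forall j, (j<n)%nat -> j <> i -> L' <= a j * x' j + b j + t j).
 { intros j Hj Hji. pose proof (Wx' i j Hi Hj Hxp) as W. simpl in W. unfold update in W.
   rewrite Nat.eqb_refl in W. destruct (Nat.eqb_spec j i); [lia|]. unfold L'. lra. }
 set (K := Kf n a w i).
 assert (S1 : rsum n x' = x' i + rsum n (fun j => if Nat.eqb j i then 0 else x' j)) by (apply rsum_split; auto).
 assert (S2 : rsum n (fun j => if Nat.eqb j i then 0 else w j * (L' - (b j + t j)) / a j)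
            <= rsum n (fun j => if Nat.eqb j i then 0 else x' j)).
 { apply rsum_le. intros j Hj. destruct (Nat.eqb_spec j i). lra.
   pose proof (HL' j Hj n0). pose proof (Ha j Hj). pose proof (Hw j Hj). pose proof (Hx'0 j Hj).
   assert ((L' - (b j + t j)) / a j <= x' j).
   { apply (Rmult_le_reg_r (a j)); auto. unfold Rdiv. rewrite Rmult_assoc, Rinv_l by lra. nra. }
   unfold Rdiv in *. rewrite Rmult_assoc. nra. }
 assert (S3 : rsum n (fun j => if Nat.eqb j i then 0 else w j * (L' - (b j + t j)) / a j)
      = rsum n (fun j => if Nat.eqb j i then 0 else y j) + (L' - L) * K).
 { unfold K, Kf. rewrite <- rsum_scal, <- rsum_plus. apply rsum_ext. intros j Hj.
   destruct (Nat.eqb_spec j i). ring.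
   pose proof (Ha j Hj). destruct (Hcost j Hj) as [C1 C2].
   destruct (Rlt_dec (b j) L).
   - rewrite (Hw1 j Hj r). rewrite <- (C1 r). field. lra.
   - destruct (C2 ltac:(lra)) as [E1 E2]. rewrite E1, E2.
     destruct (Rlt_dec L (b j)). rewrite (Hw0 j Hj r). field. lra.
     assert (Hbj : b j = L) by lra. rewrite Hbj. field. lra. }
 assert (S4 : rsum n y = y i + rsum n (fun j => if Nat.eqb j i then 0 else y j)) by (apply rsum_split; auto).
 assert (Sy : rsum n y = 1) by exact HY.
 assert (HLi : L <= a i * y i + b i + t i) by (apply Ly; auto).
 pose proof (Ha i Hi) as Hai. pose proof (HK i) as HKi. fold K in HKi.
 assert (Hmain : (y i - x' i) * (1 + a i * K) >= K * (v - t i)).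
 { assert (K * ((L' - L) - (a i * (x' i - y i) + v - t i)) >= 0).
   { apply Rle_ge, Rmult_le_pos; auto. unfold L'. lra. }
   nra. }
 set (s := K / (1 + a i * K)).
 assert (Hs0 : 0 <= s). { unfold s. unfold Rdiv. apply Rmult_le_pos; auto. left; apply Rinv_0_lt_compat; nra. }
 assert (Hsd : y i - x' i >= s * (v - t i)).
 { unfold s. apply Rle_ge. apply (Rmult_le_reg_r (1 + a i * K)). nra.
   replace (K / (1 + a i * K) * (v - t i) * (1 + a i * K)) with (K * (v - t i)). lra.
   field. nra. }
 assert (Hb : v * x' i <= v * (y i - s * (v - t i))).
 { apply Rmult_le_compat_l; lra. }
 apply Rle_ge. eapply Rle_trans. exact Hb.
 destruct (Rlt_dec (b i) L) as [Hbl|Hbl].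
 - destruct (T_facts n a b c w L i Hai Hc (HK i) ltac:(lra)) as [_ [HX [_ [_ Hcase]]]].
   fold K in HX.
   assert (Hyi : y i = (L - b i - Tf n a b c w L i) / a i).
   { unfold y, yg, ltA. destruct (Rlt_dec (b i) L); [auto|lra]. }
   assert (Hti : t i = Tf n a b c w L i).
   { unfold t, tt. destruct (Rlt_dec (b i) L); [auto|lra]. }
   set (X := Xf n a b w L i) in *. set (T := Tf n a b c w L i) in *.
   set (u := L - b i) in *.
   assert (Hya : y i * a i = u - T). { rewrite Hyi. field. lra. }
   assert (Hsk : s * (1 + a i * K) = K). { unfold s. field. nra. }
   destruct Hcase as [[E1 E2]|[E1 E2]].
   +
     assert (Hys : y i = s * t i).
     { assert (Q1 : y i * a i * (1 + a i * K) = a i * (K * X)).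
       { rewrite Hya. rewrite E1. nra. }
       assert (Q2 : y i * (1 + a i * K) = K * X).
       { apply (Rmult_eq_reg_l (a i)). rewrite <- Q1. rewrite (Rmult_comm (y i) (a i)), Rmult_assoc. reflexivity. lra. }
       apply (Rmult_eq_reg_r (1 + a i * K)). 2: nra.
       rewrite Q2, Hti, E1. rewrite <- Hsk at 1. ring. }
     rewrite Hys. assert (0 <= s * ((t i - v) * (t i - v))) by (apply Rmult_le_pos; [exact Hs0 | apply Rle_0_sqr]). nra.
   +
     assert (Hv2 : v <= t i) by lra.
     assert (Hyc : y i >= s * c).
     { apply Rle_ge. apply (Rmult_le_reg_r (a i * (1 + a i * K))). nra.
       replace (s * c * (a i * (1 + a i * K))) with (a i * c * (s * (1 + a i * K))) by ring.
       rewrite Hsk.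
       replace (y i * (a i * (1 + a i * K))) with ((y i * a i) * (1 + a i * K)) by ring.
       rewrite Hya. rewrite <- E1.
       assert (X * (1 + 2 * a i * K) >= c * (1 + 2 * a i * K)) by (apply Rle_ge, Rmult_le_compat_r; nra).
       nra. }
     assert ((t i - v) * (y i - s * v) >= 0).
     { apply Rle_ge, Rmult_le_pos. lra. nra. }
     nra.
 - destruct (Hcost i Hi) as [_ C2]. destruct (C2 ltac:(lra)) as [E1 E2]. rewrite E1, E2.
   nra. Qed.

Ltac cstep := match goal with
 | |- continuity (fun _ => ?k) => apply cconst
 | |- continuity (fun p => @?f p + @?g p) => apply (cplus f g)
 | |- continuity (fun p => @?f p - @?g p) => apply (cminus f g)
 | |- continuity (fun p => @?f p * @?g p) => apply (cmult f g)
 | |- continuity (fun p => mn (@?f p) (@?g p)) => apply (cmn f g)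
 | |- continuity (fun p => @?f p / @?g p) => apply (cdiv f g)
 end.

Lemma Yg_cont n a b c (Lf : R -> R) (wf : R -> nat -> R) A :
  (forall i, (i<n)%nat -> 0 < a i) -> continuity Lf -> (forall j, continuity (fun p => wf p j)) ->
  (forall p j, (j<n)%nat -> 0 <= wf p j) -> continuity (fun p => Yg n a b c (wf p) (Lf p) A).
Proof. intros Ha HL Hwc Hw0. unfold Yg. apply cont_rsum. intros i Hi. unfold yg. destruct (A i). 2: apply cconst.
 assert (HK: continuity (fun p => Kf n a (wf p) i)).
 { unfold Kf. apply cont_rsum. intros j Hj. destruct (Nat.eqb j i). apply cconst.
   cstep. apply Hwc. apply cconst. intros p. apply Rgt_not_eq, Ha; auto. }
 assert (HKp : forall p, 0 <= Kf n a (wf p) i) by (intros; apply K_nonneg; auto).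
 unfold Tf, Xf. cstep. 3: (intros p; apply Rgt_not_eq, Ha; auto).
 2: apply cconst.
 cstep. cstep. exact HL. apply cconst. cstep. apply cconst.
 cstep. cstep. cstep. exact HL. apply cconst. cstep. apply cconst. cstep. apply cconst. exact HK.
 cstep. apply cconst. cstep. apply cconst. exact HK.
 intros p. pose proof (HKp p). pose proof (Ha i Hi). apply Rgt_not_eq. nra. Qed.

Definition wplus (b : nat -> R) L j := if Rle_dec (b j) L then 1 else 0.
Definition wth (b : nat -> R) L th j := if Rlt_dec (b j) L then 1 else if Req_dec_T (b j) L then th * th else 0.
Definition leA (b : nat -> R) B : nat -> bool := fun i => if Rle_dec (b i) B then true else false.

Lemma theta_case n a b c L : (forall i, (i<n)%nat -> 0 < a i) -> 0 <= c ->
  Yg n a b c (wth b L 0) L (ltA b L) <= 1 -> 1 <= Yg n a b c (wplus b L) L (ltA b L) ->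
  exists w, Good n a b c L w.
Proof. intros Ha Hc H0 H1.
 set (f := fun th => Yg n a b c (wth b L th) L (ltA b L) - 1).
 assert (Cf : continuity f).
 { unfold f. apply (cminus (fun th => Yg n a b c (wth b L th) L (ltA b L)) (fun _ => 1)).
   apply (Yg_cont n a b c (fun _ => L) (fun th => wth b L th)); auto. apply cconst.
   intros j. unfold wth. destruct (Rlt_dec (b j) L). apply cconst. destruct (Req_dec_T (b j) L).
   apply (cmult (fun p => p) (fun p => p)); apply cid. apply cconst.
   intros p j _. unfold wth. destruct (Rlt_dec (b j) L). lra. destruct (Req_dec_T (b j) L). nra. lra.
   apply cconst. }
 assert (F1 : f 1 = Yg n a b c (wplus b L) L (ltA b L) - 1).
 { unfold f. f_equal. apply Yg_ext_w. intros j _. unfold wth, wplus.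
   destruct (Rlt_dec (b j) L); destruct (Rle_dec (b j) L); try lra.
   destruct (Req_dec_T (b j) L); lra. destruct (Req_dec_T (b j) L); lra. }
 destruct (IVT_cor f 0 1 Cf ltac:(lra)) as [th [Hth Hf]].
 { rewrite F1. unfold f. nra. }
 exists (wth b L th). unfold Good. split; [|split; [|split]].
 - intros j _. unfold wth. destruct (Rlt_dec (b j) L). lra. destruct (Req_dec_T (b j) L); split; nra.
 - intros j _ Hj. unfold wth. destruct (Rlt_dec (b j) L). lra. destruct (Req_dec_T (b j) L); lra.
 - intros j _ Hj. unfold wth. destruct (Rlt_dec (b j) L). lra. destruct (Req_dec_T (b j) L); lra.
 - unfold f in Hf. lra. Qed.

Lemma exists_good n a b c : (1 <= n)%nat -> (forall i, (i<n)%nat -> 0 < a i /\ 0 <= b i) -> 0 <= c ->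
  exists L w, Good n a b c L w.
Proof. intros Hn Hab Hc.
 assert (Ha : forall i, (i<n)%nat -> 0 < a i) by (intros; apply Hab; auto).
 set (Yp := fun L => Yg n a b c (wplus b L) L (ltA b L)).
 destruct (classic (exists k, (k<n)%nat /\ 1 <= Yp (b k))) as [HP|HnP].
 - destruct (fin_min n (fun k => 1 <= Yp (b k)) b HP) as [k [Hk [Pk Mk]]].
   set (Y0 := Yg n a b c (wth b (b k) 0) (b k) (ltA b (b k))).
   destruct (Rle_dec Y0 1) as [HY0|HY0].
   + exists (b k). apply theta_case; auto.
   + assert (HQ: exists j, (j<n)%nat /\ b j < b k).
     { apply NNPP; intro Hno. apply HY0. unfold Y0, Yg.
       rewrite (rsum_ext n _ (fun _ => 0)). rewrite rsum_zero; lra.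
       intros i Hi. unfold yg, ltA. destruct (Rlt_dec (b i) (b k)).
       exfalso; apply Hno; exists i; auto. auto. }
     destruct (fin_max n (fun j => b j < b k) b HQ) as [q [Hq [Qq Mq]]].
     assert (Hnq: Yp (b q) < 1).
     { destruct (Rlt_dec (Yp (b q)) 1) as [r|r]; auto. specialize (Mk q Hq ltac:(lra)). lra. }
     set (w := wplus b (b q)). set (A := leA b (b q)).
     set (G := fun L => Yg n a b c w L A - 1).
     assert (Gq : G (b q) < 0).
     { unfold G. unfold Yp in Hnq. fold w in Hnq.
       rewrite (Yg_ext_A n a b c w (b q) A (ltA b (b q))). lra. auto.
       intros i Hi. unfold A, leA, ltA. destruct (Rle_dec (b i) (b q)); destruct (Rlt_dec (b i) (b q)); auto; lra. }
     assert (Heq : forall i, (i<n)%nat -> (b i <= b q <-> b i < b k)).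
     { intros i Hi. split; intros. lra. apply Mq; auto. }
     assert (Gk : G (b k) > 0).
     { unfold G. unfold Y0 in HY0.
       rewrite (Yg_ext_w n a b c w (wth b (b k) 0)).
       rewrite (Yg_ext_A n a b c _ (b k) A (ltA b (b k))). lra. auto.
       intros i Hi. left. unfold A, leA, ltA.
       destruct (Rle_dec (b i) (b q)) as [r1|r1]; destruct (Rlt_dec (b i) (b k)) as [r2|r2]; auto;
         exfalso; first [apply r2 | apply r1]; apply (Heq i Hi); auto.
       intros j Hj. unfold w, wplus, wth. pose proof (Heq j Hj).
       destruct (Rle_dec (b j) (b q)) as [r1|r1]; destruct (Rlt_dec (b j) (b k)) as [r2|r2]; try lra;
       try (exfalso; first [apply r2 | apply r1]; apply H1; lra).
       all: destruct (Req_dec_T (b j) (b k)); lra. }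
     assert (CG : continuity G).
     { unfold G. apply (cminus (fun L => Yg n a b c w L A) (fun _ => 1)); [|apply cconst].
       apply (Yg_cont n a b c (fun L => L) (fun _ => w)); auto. apply cid.
       intros; apply cconst. intros p j _. unfold w, wplus. destruct (Rle_dec (b j) (b q)); lra. }
     destruct (IVT G (b q) (b k) CG Qq Gq Gk) as [z [Hz Gz]].
     assert (z <> b q) by (intro E; rewrite E in Gz; lra).
     assert (z <> b k) by (intro E; rewrite E in Gz; lra).
     exists z, w. unfold Good. split; [|split; [|split]].
     * intros j _. unfold w, wplus. destruct (Rle_dec (b j) (b q)); lra.
     * intros j Hj Hbj. unfold w, wplus. destruct (Rle_dec (b j) (b q)); auto.
       specialize (Mq j Hj ltac:(lra)). lra.
     * intros j Hj Hbj. unfold w, wplus. destruct (Rle_dec (b j) (b q)); auto. lra.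
     * unfold G in Gz. rewrite (Yg_ext_A n a b c w z (ltA b z) A). lra. auto.
       intros i Hi. left. unfold A, leA, ltA.
       destruct (Rle_dec (b i) (b q)); destruct (Rlt_dec (b i) z); auto. lra.
       specialize (Mq i Hi ltac:(lra)). lra.
 - destruct (fin_max n (fun _ => True) b) as [q [Hq [_ Mq]]]. exists O; split; auto; lia.
   assert (Hnq : Yp (b q) < 1).
   { destruct (Rlt_dec (Yp (b q)) 1) as [r|r]; auto. exfalso; apply HnP; exists q; split; auto; lra. }
   set (w := fun _ : nat => 1). set (A := fun _ : nat => true).
   set (G := fun L => Yg n a b c w L A - 1).
   assert (Gq : G (b q) < 0).
   { unfold G. unfold Yp in Hnq.
     rewrite (Yg_ext_w n a b c w (wplus b (b q))).
     rewrite (Yg_ext_A n a b c _ (b q) A (ltA b (b q))). lra. auto.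
     intros i Hi. unfold A, ltA. destruct (Rlt_dec (b i) (b q)); auto.
     specialize (Mq i Hi I). right; lra.
     intros j Hj. unfold w, wplus. destruct (Rle_dec (b j) (b q)); auto. specialize (Mq j Hj I); lra. }
   set (Lb := b q + c + a q).
   pose proof (Ha q Hq).
   assert (HKw : forall i, 0 <= Kf n a w i) by (intros; apply K_nonneg; auto; intros; unfold w; lra).
   assert (Gb : G Lb >= 0).
   { unfold G. unfold Yg.
     assert (yg n a b c w Lb A q <= rsum n (yg n a b c w Lb A)).
     { apply rsum_ge_term; auto. intros j Hj. apply yg_nonneg; auto.
       intros _. specialize (Mq j Hj I). unfold Lb. lra. }
     assert (1 <= yg n a b c w Lb A q).
     { unfold yg, A. destruct (T_facts n a b c w Lb q (Ha q Hq) Hc (HKw q) ltac:(unfold Lb; lra)) as [_ [_ [HT _]]].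
       apply (Rmult_le_reg_r (a q)); auto. unfold Rdiv. rewrite Rmult_assoc, Rinv_l by lra.
       unfold Lb in *. lra. }
     lra. }
   assert (CG : continuity G).
   { unfold G. apply (cminus (fun L => Yg n a b c w L A) (fun _ => 1)); [|apply cconst].
     apply (Yg_cont n a b c (fun L => L) (fun _ => w)); auto. apply cid.
     intros; apply cconst. intros p j _. unfold w; lra. }
   destruct (IVT_cor G (b q) Lb CG ltac:(unfold Lb; lra) ltac:(nra)) as [z [Hz Gz]].
   assert (z <> b q) by (intro E; rewrite E in Gz; lra).
   exists z, w. unfold Good. split; [|split; [|split]].
   * intros j _. unfold w; lra.
   * intros j _ _. auto.
   * intros j Hj Hbj. specialize (Mq j Hj I). lra.
   * unfold G in Gz. rewrite (Yg_ext_A n a b c w z (ltA b z) A). lra. auto.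
     intros i Hi. left. unfold A, ltA. destruct (Rlt_dec (b i) z); auto.
     specialize (Mq i Hi I). lra. Qed.

Theorem mainTheorem1 (n : nat) (a b : nat -> R) (c : R) :
  (2 <= n)%nat ->
  (forall i, (i < n)%nat -> 0 < a i /\ 0 <= b i) ->
  0 <= c ->
  exists t : nat -> R, capped_SPNE n (fun i y => a i * y + b i) c t.
Proof. intros Hn Hab Hc.
 destruct (exists_good n a b c ltac:(lia) Hab Hc) as [L [w HG]].
 exists (tt n a b c w L). apply lemmaA; auto. Qed.
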